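(* Let $P$ and $Q$ be two probability distributions on a finite set $\mathcal{A}$ that are positive on $\mathcal{A}$. Then $$\min_{x\in\mathcal{A}}\frac{P(x)}{Q(x)}\cdot D(Q\|P)\;\le\;\log\bigl(1+\chi^2(P,Q)\bigr)-D(P\|Q)\;\le\;\max_{x\in\mathcal{A}}\frac{P(x)}{Q(x)}\cdot D(Q\|P).$$
   Context: $D(P\|Q)=\sum_{x\in\mathcal{A}}P(x)\log\frac{P(x)}{Q(x)}$ is the relative entropy (natural logarithm), and $\chi^2(P,Q)=\sum_{x\in\mathcal{A}}\frac{(P(x)-Q(x))^2}{Q(x)}$ is the chi-squared divergence. *)

(* Defs.v *)
From mathcomp Require Import all_boot all_order all_algebra.
From mathcomp Require Import all_classical all_reals all_analysis.
Set Implicit Arguments. Unset Strict Implicit. Unset Printing Implicit Defensive.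
Import Order.TTheory GRing.Theory Num.Theory.
Local Open Scope ring_scope.

Definition positive_distr (R : realType) (A : finType) (P : A -> R) : Prop :=
  (forall x, 0 < P x) /\ \sum_(x : A) P x = 1.

Definition KL (R : realType) (A : finType) (P Q : A -> R) : R :=
  \sum_(x : A) P x * ln (P x / Q x).

Definition chi2 (R : realType) (A : finType) (P Q : A -> R) : R :=
  \sum_(x : A) (P x - Q x) ^+ 2 / Q x.

(* min / max over the (nonempty) finite set A of f, computed over enum A;
   on an empty type these return 0 (irrelevant: distributions force A nonempty). *)
Definition fmin (R : realType) (A : finType) (f : A -> R) : R :=
  match enum A with
  | [::] => 0
  | a :: s => foldr (fun x m => Num.min (f x) m) (f a) s
  end.
Definition fmax (R : realType) (A : finType) (f : A -> R) : R :=
  match enum A with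
  | [::] => 0
  | a :: s => foldr (fun x m => Num.max (f x) m) (f a) s
  end.

(* Main.v *)
Require Import Defs.
From mathcomp Require Import all_boot all_order all_algebra.
From mathcomp Require Import all_classical all_reals all_analysis.
From mathcomp Require Import ring lra.
Import Order.TTheory GRing.Theory Num.Theory.
Local Open Scope ring_scope.

Section Aux.

Context {R : realType}.

Lemma ln_le_sub1 {x : R} : 0 < x -> ln x <= x - 1.
Proof.
move=> hx; have := expR_ge1Dx (ln x); rewrite lnK ?posrE //; lra.
Qed.

Lemma foldr_min_le (T : eqType) (f : T -> R) (s : seq T) (a x : T) :
  x \in a :: s -> foldr (fun y m => Num.min (f y) m) (f a) s <= f x.
Proof.
elim: s => [|b s IH] /=.
  by rewrite inE => /eqP ->.
move=> hx; have hx' := hx; rewrite !inE in hx'.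
case/orP: hx' => [/eqP hxa|/orP [/eqP ->|hx']].
- by rewrite ge_min; apply/orP; right; apply: IH; rewrite hxa mem_head.
- by rewrite ge_min lexx.
- by rewrite ge_min; apply/orP; right; apply: IH; rewrite inE hx' orbT.
Qed.

Lemma foldr_min_ge0 (T : eqType) (f : T -> R) (s : seq T) (a : T) :
  (forall y, 0 <= f y) -> 0 <= foldr (fun y m => Num.min (f y) m) (f a) s.
Proof.
move=> h; elim: s => [|b s IH] /=; first exact: h.
by rewrite le_min h IH.
Qed.

Lemma foldr_max_ge (T : eqType) (f : T -> R) (s : seq T) (a x : T) :
  x \in a :: s -> f x <= foldr (fun y m => Num.max (f y) m) (f a) s.
Proof.
elim: s => [|b s IH] /=.
  by rewrite inE => /eqP ->.
move=> hx; have hx' := hx; rewrite !inE in hx'.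
case/orP: hx' => [/eqP hxa|/orP [/eqP ->|hx']].
- by rewrite le_max; apply/orP; right; apply: IH; rewrite hxa mem_head.
- by rewrite le_max lexx.
- by rewrite le_max; apply/orP; right; apply: IH; rewrite inE hx' orbT.
Qed.

Lemma fmin_le (A : finType) (f : A -> R) x : fmin f <= f x.
Proof.
rewrite /fmin; have : x \in enum A by rewrite mem_enum.
case: (enum A) => [//|a s]; exact: foldr_min_le.
Qed.

Lemma fmin_ge0 (A : finType) (f : A -> R) : (forall y, 0 <= f y) -> 0 <= fmin f.
Proof.
move=> h; rewrite /fmin; case: (enum A) => [//|a s]; exact: foldr_min_ge0.
Qed.

Lemma fmax_ge (A : finType) (f : A -> R) x : f x <= fmax f.
Proof.
rewrite /fmax; have : x \in enum A by rewrite mem_enum.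
case: (enum A) => [//|a s]; exact: foldr_max_ge.
Qed.

Lemma sum_lin (A : finType) (Q r : A -> R) (c0 c1 c2 : R) :
  \sum_x (c2 * (Q x * r x ^+ 2) + c1 * (Q x * r x) + c0 * Q x) =
  c2 * \sum_x Q x * r x ^+ 2 + c1 * \sum_x Q x * r x + c0 * \sum_x Q x.
Proof. by rewrite !big_split /= -!mulr_sumr. Qed.

End Aux.

Theorem corollary1 (R : realType) (A : finType) (P Q : A -> R) :
  positive_distr P -> positive_distr Q ->
  fmin (fun x => P x / Q x) * KL Q P <= ln (1 + chi2 P Q) - KL P Q /\
  ln (1 + chi2 P Q) - KL P Q <= fmax (fun x => P x / Q x) * KL Q P.
Proof.
move=> [Pp P1] [Qp Q1].
set r := fun x => P x / Q x.
have rp : forall x, 0 < r x by move=> x; rewrite /r divr_gt0.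
have PQ : forall x, P x = Q x * r x.
  by move=> x; rewrite /r mulrC divfK // gt_eqF.
have S1 : \sum_x Q x * r x = 1 by rewrite -P1; apply: eq_bigr => x _; rewrite PQ.
set S := \sum_x Q x * r x ^+ 2.
have HS : 1 + chi2 P Q = S.
  have -> : chi2 P Q = \sum_x (1 * (Q x * r x ^+ 2) + (-2) * (Q x * r x) + 1 * Q x).
    apply: eq_bigr => x _; rewrite PQ; field; by rewrite gt_eqF.
  rewrite sum_lin S1 Q1 -/S; ring.
have KP : KL P Q = \sum_x Q x * r x * ln (r x).
  by apply: eq_bigr => x _; rewrite {1}PQ.
have KQ : KL Q P = - \sum_x Q x * ln (r x).
  rewrite /KL -sumrN; apply: eq_bigr => x _.
  rewrite -invf_div lnV; last by rewrite posrE divr_gt0.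
  by rewrite mulrN.
rewrite HS KP KQ.
have chi0 : 0 <= chi2 P Q.
  by apply: sumr_ge0 => x _; rewrite divr_ge0 ?sqr_ge0 // ltW.
have Sp : 0 < S by rewrite -HS; lra.
set L := ln S.
set u := S^-1.
have Su : S * u = 1 by rewrite /u mulfV // gt_eqF.
have up : 0 < u by rewrite /u invr_gt0.
have Lu : 1 - u <= L.
  have := ln_le_sub1 up; rewrite /u lnV ?posrE // -/L; lra.
split.
- set m := fmin _.
  have hm0 : 0 <= m by apply: fmin_ge0 => y; apply: ltW; apply: rp.
  have hmr : forall x, m <= r x by move=> x; apply: fmin_le.
  have H : \sum_x (Q x * r x * ln (r x) - m * (Q x * ln (r x))) <=
     \sum_x (u * (Q x * r x ^+ 2) + (L - 1 - m * u) * (Q x * r x) + (- m * (L - 1)) * Q x).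
    apply: ler_sum => x _.
    have t : ln (r x) <= L + r x * u - 1.
      have e : ln (r x) = L + ln (r x * u).
        have e2 : S * (r x * u) = r x by rewrite /u; field; rewrite gt_eqF.
        rewrite /L -lnM; [by rewrite e2|by rewrite posrE|by rewrite posrE mulr_gt0].
      rewrite e; have := ln_le_sub1 (mulr_gt0 (rp x) up); lra.
    have q0 : 0 <= Q x * (r x - m) by rewrite mulr_ge0 ?subr_ge0 ?hmr // ltW.
    have := ler_wpM2l q0 t.
    have -> : Q x * r x * ln (r x) - m * (Q x * ln (r x)) = Q x * (r x - m) * ln (r x) by ring.
    move=> h; apply: (le_trans h); rewrite le_eqVlt; apply/orP; left; apply/eqP.
    rewrite /u; field; by rewrite gt_eqF.
  rewrite sum_lin S1 Q1 -/S sumrB -mulr_sumr in H.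
  nra.
- set M := fmax _.
  have hMr : forall x, r x <= M by move=> x; apply: fmax_ge.
  have H : \sum_x (1 * (Q x * r x ^+ 2) + (- (M + 1)) * (Q x * r x) + M * Q x) <=
           \sum_x (Q x * r x * ln (r x) - M * (Q x * ln (r x))).
    apply: ler_sum => x _.
    have h1 : 0 <= r x - 1 - ln (r x) by have := ln_le_sub1 (rp x); lra.
    have hm : 0 <= M - r x by rewrite subr_ge0.
    have h := mulr_ge0 (mulr_ge0 (ltW (Qp x)) hm) h1.
    rewrite -subr_ge0.
    have -> : Q x * r x * ln (r x) - M * (Q x * ln (r x)) -
      (1 * (Q x * r x ^+ 2) + - (M + 1) * (Q x * r x) + M * Q x) =
      Q x * (M - r x) * (r x - 1 - ln (r x)) by ring.
    exact: h.
  rewrite sum_lin S1 Q1 -/S sumrB -mulr_sumr in H.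
  have := ln_le_sub1 Sp; rewrite -/L.
  lra.
Qed.
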